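(* Let $A\in\mathbb{R}^{10\times10}$ be the coefficient matrix of SSPERK$(10,4)$: $a_{ij}=\frac16$ for $1\le j<i\le5$; $a_{ij}=\frac1{15}$ for $6\le i\le 10$, $1\le j\le 5$; $a_{ij}=\frac16$ for $6\le j<i\le 10$; all other entries zero. Let $c=A\mathbf e$. If $\tilde b\in\mathbb{R}^{10}$ satisfies the third-order conditions $$\tilde b^T\mathbf e=1,\quad \tilde b^Tc=\tfrac12,\quad \tilde b^Tc^2=\tfrac13,\quad \tilde b^T\Big(\tfrac{c^2}{2}-Ac\Big)=0,$$ then it also satisfies the fourth-order condition $\tilde b^T\big(\frac{c^3}{6}-\frac{Ac^2}{2}\big)=0$. In particular no embedded third-order weight vector for SSPERK$(10,4)$ can violate all fourth-order conditions.
   Context: $\mathbf e=(1,\dots,1)^T$; powers of vectors such as $c^2,c^3$ are taken componentwise. *)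

(* Defs.v *)
(* Statement over the reals; the claim is purely algebraic,
   so it is stated for an arbitrary real field R (includes the reals). *)
From HB Require Import structures.
From mathcomp Require Import all_boot all_order all_algebra.
Set Implicit Arguments. Unset Strict Implicit. Unset Printing Implicit Defensive.
Import Order.TTheory GRing.Theory Num.Theory.
Local Open Scope ring_scope.

(* Coefficient matrix of SSPERK(10,4), 0-based indices:
   paper (i,j) with 1<=j<i<=5  <-> i,j : 'I_10 with j < i <= 4      : 1/6
   paper 6<=i<=10, 1<=j<=5     <-> 5 <= i, j <= 4                   : 1/15
   paper 6<=j<i<=10            <-> 5 <= j < i                       : 1/6
   otherwise 0. *)
Definition ssperk104_A (R : fieldType) : 'M[R]_10 :=
  \matrix_(i < 10, j < 10)
    (if ((j < i)%N && (i <= 4)%N) then 6%:R^-1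
     else if ((5 <= i)%N && (j <= 4)%N) then 15%:R^-1
     else if ((5 <= j)%N && (j < i)%N) then 6%:R^-1
     else 0).

Definition evec (R : fieldType) (n : nat) : 'cV[R]_n := const_mx 1.

Definition cpow (R : fieldType) (n : nat) (v : 'cV[R]_n) (k : nat) : 'cV[R]_n :=
  map_mx (fun x => x ^+ k) v.

Definition dotv (R : fieldType) (n : nat) (b x : 'cV[R]_n) : R :=
  (b^T *m x) 0 0.

(* Main.v *)
Require Import Defs.
From HB Require Import structures.
From mathcomp Require Import all_boot all_order all_algebra.
From mathcomp Require Import ring lra.
Import Order.TTheory GRing.Theory Num.Theory.
Local Open Scope ring_scope.

Definition cv (R : realFieldType) (i : nat) : R :=
  nth 0 [:: 0; 6%:R^-1; 3%:R^-1; 2%:R^-1; 2%:R/3%:R; 3%:R^-1; 2%:R^-1; 2%:R/3%:R; 5%:R/6%:R; 1] i.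
Definition acv (R : realFieldType) (i : nat) : R :=
  nth 0 [:: 0; 0; 36%:R^-1; 12%:R^-1; 6%:R^-1; 9%:R^-1; 6%:R^-1; 4%:R^-1; 13%:R/36%:R; 2%:R^-1] i.
Definition ac2v (R : realFieldType) (i : nat) : R :=
  nth 0 [:: 0; 0; 216%:R^-1; 5%:R/216%:R; 7%:R/108%:R; 18%:R^-1; 2%:R/27%:R; 25%:R/216%:R; 41%:R/216%:R; 11%:R/36%:R] i.

Lemma cpowE (R : realFieldType) n (v : 'cV[R]_n) k i j : cpow v k i j = (v i j)^+k.
Proof. by rewrite mxE. Qed.
Lemma evecE (R : realFieldType) n i j : evec R n i j = 1.
Proof. by rewrite mxE. Qed.
Lemma zsubE (R : realFieldType) n (u w : 'cV[R]_n) a i j : (a *: u - w) i j = a * u i j - w i j.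
Proof. by rewrite !mxE. Qed.
Lemma zsubzE (R : realFieldType) n (u w : 'cV[R]_n) a b i j : (a *: u - b *: w) i j = a * u i j - b * w i j.
Proof. by rewrite !mxE. Qed.

Lemma cE (R : realFieldType) (i : 'I_10) : (ssperk104_A R *m evec R 10) i 0 = cv R i.
Proof.
rewrite mxE !big_ord_recr big_ord0 /=.
case: i => [[|[|[|[|[|[|[|[|[|[|m]]]]]]]]]] Hi] //; rewrite /ssperk104_A /evec !mxE /= /cv /=; lra.
Qed.

Lemma acE (R : realFieldType) (i : 'I_10) :
  (ssperk104_A R *m (ssperk104_A R *m evec R 10)) i 0 = acv R i.
Proof.
rewrite mxE; under eq_bigr => j _ do rewrite cE.
rewrite !big_ord_recr big_ord0 /=.
case: i => [[|[|[|[|[|[|[|[|[|[|m]]]]]]]]]] Hi] //; rewrite /ssperk104_A !mxE /= /cv /acv /=; lra.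
Qed.

Lemma ac2E (R : realFieldType) (i : 'I_10) :
  (ssperk104_A R *m cpow (ssperk104_A R *m evec R 10) 2) i 0 = ac2v R i.
Proof.
rewrite mxE; under eq_bigr => j _ do rewrite cpowE cE.
rewrite !big_ord_recr big_ord0 /=.
case: i => [[|[|[|[|[|[|[|[|[|[|m]]]]]]]]]] Hi] //; rewrite /ssperk104_A !mxE /= /cv /ac2v /=; lra.
Qed.

Lemma dotvE (R : realFieldType) (b x : 'cV[R]_10) :
  dotv b x = \sum_(i < 10) b i 0 * x i 0.
Proof. by rewrite /dotv mxE; apply: eq_bigr => i _; rewrite mxE. Qed.

Theorem mainTheorem4 (R : realFieldType) (bt : 'cV[R]_10) :
  let A := ssperk104_A R in
  let e := evec R 10 in
  let c := A *m e in
  dotv bt e = 1 ->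
  dotv bt c = 2%:R^-1 ->
  dotv bt (cpow c 2) = 3%:R^-1 ->
  dotv bt (2%:R^-1 *: cpow c 2 - A *m c) = 0 ->
  dotv bt (6%:R^-1 *: cpow c 3 - 2%:R^-1 *: (A *m cpow c 2)) = 0.
Proof.
move=> A e c h1 h2 h3 h4; move: h1 h2 h3 h4; rewrite /c /A /e !dotvE => h1 h2 h3 h4.
under eq_bigr => j _ do rewrite zsubzE cpowE ac2E cE.
rewrite (eq_bigr (fun j => bt j 0 * 1)) in h1; last by move=> j _; rewrite evecE.
rewrite (eq_bigr (fun j : 'I_10 => bt j 0 * cv R j)) in h2; last by move=> j _; rewrite cE.
rewrite (eq_bigr (fun j : 'I_10 => bt j 0 * cv R j ^+ 2)) in h3; last by move=> j _; rewrite cpowE cE.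
rewrite (eq_bigr (fun j : 'I_10 => bt j 0 * (2%:R^-1 * cv R j ^+ 2 - acv R j))) in h4; last by move=> j _; rewrite zsubE cpowE acE cE.
rewrite !big_ord_recr !big_ord0 /= /cv /acv /ac2v /=.
rewrite !big_ord_recr !big_ord0 /= /cv /acv /ac2v /= in h1 h2 h3 h4.
lra.
Qed.
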